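(* Let $\Sigma$ be a mixing one-sided subshift of finite type and $L,L'\in\mathrm{QM}(\mathscr W)$. Then $L\sim L'$ if and only if $\bar L(\mathbf a)=\bar L'(\mathbf a)$ for every periodic word $\mathbf a$. Consequently $L\sim L'$ if and only if the restrictions of $L$ and $L'$ to periodic words differ by a bounded function.
   Context: $\Sigma=\{(x_n)_{n\ge0}:R_{x_nx_{n+1}}=1\}$ for an irreducible aperiodic $0/1$ matrix $R$ on alphabet $\mathscr A=\{1,\dots,d\}$. $\mathscr W$ is the set of finite allowed words (including the empty word), concatenation $\mathbf a\mathbf b$ being defined when allowed. $L:\mathscr W\to\mathbb R$ is a quasimorphism ($L\in\mathrm{QM}(\mathscr W)$) if $\sup|L(\mathbf a\mathbf b)-L(\mathbf a)-L(\mathbf b)|<\infty$ over concatenable pairs. $L\sim L'$ if $L-L'$ is bounded on $\mathscr W$. A nonempty word $\mathbf a=a_1\cdots a_n$ is periodic if $R_{a_na_1}=1$; for such $\mathbf a$, $\bar L(\mathbf a)=\lim_{k\to\infty}L(\mathbf a^k)/k$, where $\mathbf a^k$ is the $k$-fold concatenation. *)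

(* Defs.v *)
From HB Require Import structures.
From mathcomp Require Import all_boot all_order all_algebra.
From mathcomp Require Import all_classical all_reals all_analysis.
Set Implicit Arguments. Unset Strict Implicit. Unset Printing Implicit Defensive.
Import Order.TTheory GRing.Theory Num.Theory.
Import numFieldNormedType.Exports.
Local Open Scope ring_scope.

(* Alphabet {1,...,d} is represented by 'I_d; the transition matrix is an
   integer 0/1 matrix A : 'M[int]_d. *)

(* n-th power of a square matrix (works for every size d, including d = 0). *)
Definition mxpow (d : nat) (A : 'M[int]_d) (n : nat) : 'M[int]_d :=
  iter n (mulmx A) 1%:M.

Definition zero_one_mx (d : nat) (A : 'M[int]_d) : Prop :=
  forall i j, A i j = 0 \/ A i j = 1.

Definition irreducible_mx (d : nat) (A : 'M[int]_d) : Prop :=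
  forall i j, exists n : nat, 0 < mxpow A n i j.

(* aperiodic: the period gcd{ n >= 1 : (A^n)_{ii} > 0 } of every state is 1,
   i.e. the only common divisor of these return times is 1. *)
Definition aperiodic_mx (d : nat) (A : 'M[int]_d) : Prop :=
  forall (i : 'I_d) (p : nat),
    (forall n : nat, (0 < n)%N -> 0 < mxpow A n i i -> (p %| n)%N) -> p = 1%N.

Definition allowed (d : nat) (A : 'M[int]_d) (w : seq 'I_d) : bool :=
  sorted (fun x y => A x y == 1) w.

Definition quasimorphism (R : realType) (d : nat) (A : 'M[int]_d)
    (L : seq 'I_d -> R) : Prop :=
  exists C : R, forall a b : seq 'I_d, allowed A (a ++ b) ->
    `| L (a ++ b) - L a - L b | <= C.

Definition qm_equiv (R : realType) (d : nat) (A : 'M[int]_d)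
    (L L' : seq 'I_d -> R) : Prop :=
  exists C : R, forall w : seq 'I_d, allowed A w -> `| L w - L' w | <= C.

Definition periodic_word (d : nat) (A : 'M[int]_d) (a : seq 'I_d) : Prop :=
  match a with
  | [::] => False
  | x :: s => allowed A a /\ A (last x s) x = 1
  end.

Definition wpow (d : nat) (a : seq 'I_d) (k : nat) : seq 'I_d :=
  flatten (nseq k a).

Definition Lbar (R : realType) (d : nat) (L : seq 'I_d -> R) (a : seq 'I_d) : R :=
  limn (fun k : nat => L (wpow a k) / k%:R).

(* Main.v *)
Require Import Defs.
From HB Require Import structures.
From mathcomp Require Import all_boot all_order all_algebra.
From mathcomp Require Import all_classical all_reals all_analysis.
From mathcomp Require Import ring lra.
Import Order.TTheory GRing.Theory Num.Theory.
Import numFieldNormedType.Exports.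
Local Open Scope ring_scope.
Local Open Scope classical_set_scope.
Set Implicit Arguments. Unset Strict Implicit.
Section S.
Variable R : realType.

Lemma small_eventually (C e : R) : 0 <= C -> 0 < e ->
  exists N : nat, forall m : nat, (N < m)%N -> C / m%:R < e.
Proof.
move=> C0 e0.
have h0 : 0 <= C / e by rewrite divr_ge0 // ltW.
exists (Num.bound (C / e)) => m Nm.
have hb := archi_boundP h0.
have mpos : (0 : R) < m%:R by rewrite ltr0n; apply: leq_ltn_trans Nm.
have : C / e < m%:R.
  apply: lt_trans hb _; rewrite ltr_nat //.
rewrite ltr_pdivrMr // => h.
rewrite ltr_pdivrMr //.
by rewrite mulrC.
Qed.

Lemma cauchy_from (f : nat -> R) (C : R) : 0 <= C ->
  (forall m n, (0 < m)%N -> (0 < n)%N -> `|f m - f n| <= C / m%:R + C / n%:R) -> cvgn f.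
Proof.
move=> C0 H; apply/cauchy_cvgP/cauchy_ballP => e e0.
have e20 : 0 < e / 2 by rewrite divr_gt0.
have [N HN] := @small_eventually C (e/2) C0 e20.
rewrite near_map2 -ball_normE /=.
near=> m n.
have hm : (N < m)%N by near: m; apply: nbhs_infty_gt.
have hn : (N < n)%N by near: n; apply: nbhs_infty_gt.
apply: le_lt_trans (H _ _ _ _) _; first by apply: leq_ltn_trans hm.
  by apply: leq_ltn_trans hn.
have := HN _ hm; have := HN _ hn; lra.
Unshelve. all: by end_near.
Qed.

Section QA.
Variables (u : nat -> R) (C : R).
Hypothesis Hu : forall j k, `|u (j + k) - u j - u k| <= C.

Lemma qa_C0 : 0 <= C.
Proof. exact: le_trans (normr_ge0 _) (Hu 0 0). Qed.

Lemma qa_mul m n : `|u (m * n) - m%:R * u n| <= m.+1%:R * C.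
Proof.
elim: m => [|m IH].
  rewrite mul0n mul0r subr0 mul1r.
  have := Hu 0 0; rewrite add0n.
  have -> : u 0 - u 0 - u 0 = - u 0 by rewrite subrr sub0r.
  by rewrite normrN.
rewrite mulSn.
have := Hu n (m * n).
rewrite -[m.+2%:R]natr1 -[m.+1%:R]natr1 => h1.
have e : u (n + m * n) - (m%:R + 1) * u n =
   (u (n + m * n) - u n - u (m * n)) + (u (m * n) - m%:R * u n).
  by ring.
rewrite e; apply: le_trans (ler_normD _ _) _.
rewrite (mulrDl _ 1) mul1r addrC; apply: lerD => //.
by rewrite natr1.
Qed.

Lemma qa_step m n : (0 < m)%N -> (0 < n)%N ->
  `|u (m * n) / (m * n)%:R - u n / n%:R| <= 2 * C / n%:R.
Proof.
move=> m0 n0.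
have mR : (0 : R) < m%:R by rewrite ltr0n.
have nR : (0 : R) < n%:R by rewrite ltr0n.
have m1 : (1 : R) <= m%:R by rewrite ler1n.
have e : u (m * n) / (m * n)%:R - u n / n%:R
    = (u (m * n) - m%:R * u n) / (m%:R * n%:R).
  rewrite natrM; field.
  by rewrite !gt_eqF.
rewrite e normrM normfV (gtr0_norm (mulr_gt0 mR nR)).
rewrite ler_pdivrMr ?mulr_gt0 //.
apply: le_trans (qa_mul m n) _.
have -> : 2 * C / n%:R * (m%:R * n%:R) = 2 * C * m%:R.
  by field; rewrite gt_eqF.
have := qa_C0; rewrite -natr1; nra.
Qed.

Lemma qa_cauchy m n : (0 < m)%N -> (0 < n)%N ->
  `|u m / m%:R - u n / n%:R| <= 2 * C / m%:R + 2 * C / n%:R.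
Proof.
move=> m0 n0.
have h1 := qa_step m0 n0.
have h2 := qa_step n0 m0.
rewrite mulnC in h2.
have e : u m / m%:R - u n / n%:R =
  (u (m * n) / (m * n)%:R - u n / n%:R) - (u (m * n) / (m * n)%:R - u m / m%:R).
  by ring.
rewrite e; apply: le_trans (ler_normB _ _) _.
by rewrite addrC; apply: lerD.
Qed.

Lemma qa_cvg : cvgn (fun k => u k / k%:R).
Proof.
apply: (@cauchy_from _ (2 * C)); first by rewrite mulr_ge0 // qa_C0.
exact: qa_cauchy.
Qed.

Lemma qa_lim_near : `|limn (fun k => u k / k%:R) - u 1| <= 2 * C.
Proof.
have hk : forall k, (0 < k)%N -> `|u k / k%:R - u 1| <= 2 * C.
  move=> k k0.
  have := qa_step k0 (ltn0Sn 0).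
  by rewrite muln1 !divr1.
rewrite ler_distl; apply/andP; split.
  apply: limr_ge; first exact: qa_cvg.
  near=> k.
  have k0 : (0 < k)%N by near: k; apply: nbhs_infty_gt.
  by have := hk k k0; rewrite ler_distl => /andP[].
apply: limr_le; first exact: qa_cvg.
near=> k.
have k0 : (0 < k)%N by near: k; apply: nbhs_infty_gt.
by have := hk k k0; rewrite ler_distl => /andP[].
Unshelve. all: by end_near.
Qed.
End QA.
End S.
Section W.
Variables (d : nat) (A : 'M[int]_d).
Hypothesis A01 : zero_one_mx A.
Let r := fun x y : 'I_d => A x y == 1.

Lemma wpow_add (a : seq 'I_d) j k : wpow a (j + k) = wpow a j ++ wpow a k.
Proof. by elim: j => [|j IH] //=; rewrite /wpow /= -catA; congr (_ ++ _). Qed.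

Lemma wpow1 (a : seq 'I_d) : wpow a 1 = a.
Proof. by rewrite /wpow /= cats0. Qed.

Lemma wpow_facts x s : allowed A (x :: s) -> A (last x s) x = 1 ->
  forall k, path r x (s ++ wpow (x :: s) k) /\ last x (s ++ wpow (x :: s) k) = last x s.
Proof.
move=> al lx; elim=> [|k [IH1 IH2]].
  by rewrite /wpow /= cats0; split.
have -> : wpow (x :: s) k.+1 = x :: (s ++ wpow (x :: s) k) by [].
rewrite cat_path last_cat /= IH1 IH2; split => //.
by rewrite andbT; apply/andP; split => //; apply/eqP.
Qed.

Lemma allowed_wpow a k : periodic_word A a -> allowed A (wpow a k).
Proof.
case: a => [|x s] //= [al lx]; case: k => [|k] //.
by have [h _] := wpow_facts al lx k.
Qed.

Lemma periodic_wpow a k : periodic_word A a -> (0 < k)%N -> periodic_word A (wpow a k).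
Proof.
case: a => [|x s] //= [al lx]; case: k => [|k] //= _.
have [h1 h2] := wpow_facts al lx k.
by rewrite /= h2.
Qed.

Lemma mxpow_path n (i j : 'I_d) : 0 < mxpow A n i j ->
  exists p, [&& size p == n, path r i p & last i p == j].
Proof.
elim: n i => [|n IH] i.
  rewrite /mxpow /= mxE => h.
  exists [::] => /=; move: h; case: eqP => // -> _; by rewrite eqxx.
rewrite /mxpow /= -/(mxpow A n) mxE => h.
have [k hk] : exists k, 0 < A i k * mxpow A n k j.
  apply/not_existsP => hn; move: h; apply/negP; rewrite -leNgt.
  apply: sumr_le0 => k _; rewrite leNgt; apply/negP => hk; apply: (hn k) hk.
have [Aik|Aik] := A01 i k; first by move: hk; rewrite Aik mul0r.
move: hk; rewrite Aik mul1r => /IH [p /and3P[h1 h2 h3]].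
exists (k :: p) => /=; rewrite (eqP h1) eqxx h2 h3 /= andbT.
by rewrite /r Aik.
Qed.

Hypothesis Airr : irreducible_mx A.
Hypothesis Aaper : aperiodic_mx A.

Lemma loop_at (j : 'I_d) : exists q, [&& (0 < size q)%N, path r j q & last j q == j].
Proof.
have [n [n0 hn]] : exists n, (0 < n)%N /\ 0 < mxpow A n j j.
  apply/not_existsP => hn.
  have H := @Aaper j 0%N.
  suff : 0%N = 1%N by [].
  apply: H => n n0 hp; exfalso; apply: (hn n); split => //.
have [q /and3P[h1 h2 h3]] := mxpow_path hn.
by exists q; rewrite (eqP h1) n0 h2 h3.
Qed.

Lemma conn (i j : 'I_d) : exists c, path r i c && (A (last i c) j == 1).
Proof.
have [n hn] := Airr i j.
have [p /and3P[_ hp1 hp2]] := mxpow_path hn.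
have [q /and3P[hq0 hq1 hq2]] := loop_at j.
have : (0 < size (p ++ q))%N by rewrite size_cat addn_gt0 hq0 orbT.
have hpath : path r i (p ++ q) by rewrite cat_path hp1 (eqP hp2) hq1.
have hlast : last i (p ++ q) = j by rewrite last_cat (eqP hp2) (eqP hq2).
move: hpath hlast; case/lastP: (p ++ q) => [|c y] //.
rewrite rcons_path last_rcons => /andP[h1 h2] <- _.
by exists c; rewrite h1.
Qed.
End W.

Lemma sum_bound (R : realType) (d : nat) (F : 'I_d -> 'I_d -> R) i j :
  `|F i j| <= \sum_i0 \sum_j0 `|F i0 j0|.
Proof.
rewrite (bigD1 i) //= (bigD1 j) //= -addrA lerDl.
rewrite addr_ge0 // ?sumr_ge0 // => k _.
exact: sumr_ge0.
Qed.

Unset Implicit Arguments.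
Local Close Scope classical_set_scope.

Theorem mainTheorem9 (R : realType) (d : nat) (A : 'M[int]_d)
  (A01 : zero_one_mx A) (Airr : irreducible_mx A) (Aaper : aperiodic_mx A)
  (L L' : seq 'I_d -> R)
  (HL : quasimorphism A L) (HL' : quasimorphism A L') :
  (qm_equiv A L L' <->
     (forall a : seq 'I_d, periodic_word A a -> Lbar L a = Lbar L' a))
  /\
  (qm_equiv A L L' <->
     (exists C : R, forall a : seq 'I_d, periodic_word A a ->
        `| L a - L' a | <= C)).
Proof.
have [CL HCL] := HL; have [CL' HCL'] := HL'.
have qa : forall (M : seq 'I_d -> R) CM,
    (forall a b, allowed A (a ++ b) -> `|M (a ++ b) - M a - M b| <= CM) ->
    forall a, periodic_word A a -> forall j k,
    `|M (wpow a (j + k)) - M (wpow a j) - M (wpow a k)| <= CM.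
  move=> M CM HM a pa j k; rewrite wpow_add; apply: HM.
  by rewrite -wpow_add; apply: allowed_wpow.
have nearL : forall (M : seq 'I_d -> R) CM,
    (forall a b, allowed A (a ++ b) -> `|M (a ++ b) - M a - M b| <= CM) ->
    forall a, periodic_word A a -> `|Lbar M a - M a| <= 2 * CM.
  move=> M CM HM a pa; have := qa_lim_near (qa M CM HM a pa).
  by rewrite wpow1.
have cvgM : forall (M : seq 'I_d -> R) CM,
    (forall a b, allowed A (a ++ b) -> `|M (a ++ b) - M a - M b| <= CM) ->
    forall a, periodic_word A a -> cvgn (fun k => M (wpow a k) / k%:R).
  move=> M CM HM a pa; exact: qa_cvg (qa M CM HM a pa).
have per_all : forall a, periodic_word A a -> allowed A a.
  by case=> [|x s] //= [].
have P1 : qm_equiv A L L' -> exists C : R, forall a : seq 'I_d, periodic_word A a ->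
        `| L a - L' a | <= C.
  by move=> [C HC]; exists C => a /per_all; apply: HC.
have P2 : (exists C : R, forall a : seq 'I_d, periodic_word A a ->
        `| L a - L' a | <= C) ->
     (forall a : seq 'I_d, periodic_word A a -> Lbar L a = Lbar L' a).
  move=> [C0 HC0] a pa.
  have h1 := cvgM L CL HCL a pa.
  have h2 := cvgM L' CL' HCL' a pa.
  have hB : ((fun k => L (wpow a k) / k%:R - L' (wpow a k) / k%:R) @ \oo --> (Lbar L a - Lbar L' a))%classic.
    exact: cvgB h1 h2.
  have C00 : 0 <= C0 by apply: le_trans (normr_ge0 _) (HC0 a pa).
  have h0 : ((fun k => L (wpow a k) / k%:R - L' (wpow a k) / k%:R) @ \oo --> (0 : R))%classic.
    apply/cvgrPdist_le => e e0.
    have [N HN] := @small_eventually R C0 e C00 e0.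
    near=> k.
    have kN : (N < k)%N by near: k; apply: nbhs_infty_gt.
    have k0 : (0 < k)%N by apply: leq_ltn_trans kN.
    rewrite sub0r normrN -mulrBl normrM normfV normr_nat.
    apply/ltW; apply: le_lt_trans (HN k kN).
    apply: ler_wpM2r; first by rewrite invr_ge0 ler0n.
    by apply: HC0; apply: periodic_wpow.
  apply/subr0_eq; exact: (cvg_unique (@Rhausdorff R) hB h0).
have CL0 : 0 <= CL by apply: le_trans (normr_ge0 _) (HCL [::] [::] isT).
have CL'0 : 0 <= CL' by apply: le_trans (normr_ge0 _) (HCL' [::] [::] isT).
have P3 : (forall a : seq 'I_d, periodic_word A a -> Lbar L a = Lbar L' a) ->
    qm_equiv A L L'.
  move=> HP.
  pose f i j := xchoose (conn A01 Airr Aaper i j).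
  pose D w := L w - L' w.
  exists (3 * CL + 3 * CL' + \sum_i \sum_j `|D (f i j)| + `|D [::]|).
  have S0 : 0 <= \sum_i \sum_j `|D (f i j)|.
    by apply: sumr_ge0 => i _; apply: sumr_ge0.
  case=> [|x s] al.
    rewrite -/(D [::]) lerDr; apply: addr_ge0 => //.
    by apply: addr_ge0; apply: mulr_ge0.
  pose c := f (last x s) x.
  have /andP[hc1 hc2] := xchooseP (conn A01 Airr Aaper (last x s) x).
  rewrite -/(f _ _) -/c in hc1 hc2.
  have al2 : allowed A ((x :: s) ++ c).
    by rewrite /allowed /= cat_path; apply/andP; split.
  have pw : periodic_word A ((x :: s) ++ c).
    by split => //=; rewrite last_cat; apply/eqP.
  have h1 := nearL L CL HCL _ pw.
  have h2 := nearL L' CL' HCL' _ pw.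
  rewrite (HP _ pw) in h1.
  have h3 := HCL _ _ al2.
  have h4 := HCL' _ _ al2.
  have h5 := sum_bound (fun i j => D (f i j)) (last x s) x.
  rewrite /= in h5.
  rewrite -/(f _ _) -/c /D in h5.
  move: h1 h2 h3 h4 h5; rewrite !ler_norml /D.
  have h6 := normr_ge0 (L [::] - L' [::]).
  move=> /andP[? ?] /andP[? ?] /andP[? ?] /andP[? ?] /andP[? ?].
  apply/andP; split; lra.
split.
  split; first by move=> H; apply: P2; apply: P1.
  exact: P3.
split; first exact: P1.
by move=> H; apply: P3; apply: P2.
Unshelve. all: by end_near.
Qed.
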